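(* Let $G$ be a maximal outerplanar graph on more than $3$ vertices. Then there exists a vertex $v\in V(G)$ such that $d_G(v)=2$, $G-v$ is a maximal outerplanar graph, and at least one neighbour of $v$ has degree at most $4$ in $G$.
   Context: A graph is outerplanar if it can be drawn in the plane without crossings such that all vertices lie on the boundary of the unbounded region. A graph on at least $3$ vertices is maximal outerplanar if it is outerplanar and adding any edge between two non-adjacent vertices yields a graph that is not outerplanar. *)

(* Defs.v *)
(* A graph is given by a finite vertex set V : {set T} and a
   symmetric irreflexive adjacency relation e : rel T (only edges between
   vertices of V matter). *)
From mathcomp Require Import all_boot.
Set Implicit Arguments. Unset Strict Implicit. Unset Printing Implicit Defensive.

Section Graphs.
Variable T : finType.

(* Outerplanar: the vertices can be placed in (cyclic) order on a circle,
   given by an injective position map p, so that no two edges (drawn as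
   chords) cross, i.e. no edges ab, cd with p a < p c < p b < p d. *)
Definition outerplanar (V : {set T}) (e : rel T) : Prop :=
  exists p : T -> nat,
    {in V &, injective p} /\
    forall a b c d, a \in V -> b \in V -> c \in V -> d \in V ->
      e a b -> e c d -> ~ (p a < p c /\ p c < p b /\ p b < p d).

Definition add_edge (e : rel T) (u w : T) : rel T :=
  fun x y => [|| e x y, (x == u) && (y == w) | (x == w) && (y == u)].

Definition maximal_outerplanar (V : {set T}) (e : rel T) : Prop :=
  3 <= #|V| /\ outerplanar V e /\
  forall u w, u \in V -> w \in V -> u != w -> ~~ e u w ->
    ~ outerplanar V (add_edge e u w).

Definition deg (V : {set T}) (e : rel T) (v : T) : nat :=
  #|[set w in V | e v w]|.

End Graphs.

(* Main.v *)
Require Import Defs.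
From mathcomp Require Import all_boot zify.
Set Implicit Arguments. Unset Strict Implicit. Unset Printing Implicit Defensive.

Definition noncross (T : finType) (V : {set T}) (e : rel T) (p : T -> nat) :=
  forall a b c d, a \in V -> b \in V -> c \in V -> d \in V ->
      e a b -> e c d -> ~ (p a < p c /\ p c < p b /\ p b < p d).

Definition sat (T : finType) (V : {set T}) (e : rel T) (p : T -> nat) :=
  noncross V e p /\ forall u w, u \in V -> w \in V -> u != w -> ~~ e u w ->
    ~ noncross V (add_edge e u w) p.

Definition D (T : finType) (V : {set T}) (e : rel T) := \sum_(x in V) deg V e x.

Lemma noncross_sub (T : finType) (V W : {set T}) e p :
  W \subset V -> noncross V e p -> noncross W e p.
Proof.
move=> /subsetP sWV nc a b c d Ha Hb Hc Hd; apply: nc; exact: sWV.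
Qed.

Lemma noncross_equiv (T : finType) (V : {set T}) e p r :
  {in V &, forall x y, (p x < p y) = (r x < r y)} -> noncross V e p -> noncross V e r.
Proof.
move=> eq nc a b c d Ha Hb Hc Hd eab ecd.
rewrite -(eq a c) // -(eq c b) // -(eq b d) //; exact: nc.
Qed.

Lemma surj_of_inj (T : finType) (V : {set T}) (r : T -> nat) :
  {in V &, injective r} -> {in V, forall x, r x < #|V|} ->
  forall k, k < #|V| -> exists2 x, x \in V & r x = k.
Proof.
move=> inj bnd k hk.
have u : uniq (map r (enum V)).
  rewrite map_inj_in_uniq ?enum_uniq // => x y; rewrite !mem_enum; exact: inj.
have sub : {subset map r (enum V) <= iota 0 #|V|}.
  move=> i /mapP [x]; rewrite mem_enum => xV ->; rewrite mem_iota /=; exact: bnd.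
have sz : size (iota 0 #|V|) <= size (map r (enum V)) by rewrite size_iota size_map -cardE.
have [_ eqs] := uniq_min_size u sub sz.
have : k \in iota 0 #|V| by rewrite mem_iota.
rewrite -eqs => /mapP [x]; rewrite mem_enum => xV ->; by exists x.
Qed.

Lemma rank_exists (T : finType) (V : {set T}) (p : T -> nat) :
  {in V &, injective p} -> exists r : T -> nat,
  [/\ {in V &, injective r}, {in V, forall x, r x < #|V|} &
      {in V &, forall x y, (p x < p y) = (r x < r y)}].
Proof.
move=> inj.
pose r x := #|[set y in V | p y < p x]|.
have mono : {in V &, forall x y, p x < p y -> r x < r y}.
  move=> x y xV yV lt; apply: proper_card; apply/properP; split.
    apply/subsetP => z; rewrite !inE => /andP [-> h] /=; exact: ltn_trans h lt.
  by exists x; rewrite !inE ?xV ?lt ?ltnn.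
have eqv : {in V &, forall x y, (p x < p y) = (r x < r y)}.
  move=> x y xV yV; case: (ltngtP (p x) (p y)) => h.
  - by rewrite (mono x y).
  - by apply/esym/negbTE; rewrite -leqNgt ltnW // (mono y x).
  - by rewrite (inj x y xV yV h) ltnn.
exists r; split => //.
- move=> x y xV yV rxy; apply/eqP/negPn/negP => nxy.
  have : p x != p y by apply: contra nxy => /eqP h; apply/eqP; exact: inj.
  rewrite neq_ltn => /orP [] h.
    by move: (mono x y xV yV h); rewrite rxy ltnn.
  by move: (mono y x yV xV h); rewrite rxy ltnn.
- move=> x xV; apply: proper_card; apply/properP; split.
    by apply/subsetP => z; rewrite inE => /andP [].
  by exists x => //; rewrite inE ltnn andbF.
Qed.


Lemma deg_le (T : finType) (V : {set T}) (e : rel T) (r : T -> nat) x (L : seq nat) :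
  {in V &, injective r} -> (forall y, y \in V -> e x y -> r y \in L) ->
  deg V e x <= size L.
Proof.
move=> inj hL; rewrite /deg cardE.
rewrite -(size_map r); apply: uniq_leq_size.
  rewrite map_inj_in_uniq ?enum_uniq // => a b; rewrite !mem_enum !inE.
  move=> /andP [aV _] /andP [bV _]; exact: inj.
move=> i /mapP [y]; rewrite mem_enum inE => /andP [yV exy] ->; exact: hL.
Qed.

Lemma deg_ge2 (T : finType) (V : {set T}) (e : rel T) x y z :
  y \in V -> z \in V -> y != z -> e x y -> e x z -> 2 <= deg V e x.
Proof.
move=> yV zV yz exy exz; have <- : #|[set y; z]| = 2 by rewrite cards2 yz.
rewrite /deg.
apply: subset_leq_card; apply/subsetP => w; rewrite !inE.
by case/orP => /eqP ->; rewrite ?yV ?zV ?exy ?exz.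
Qed.

Lemma deg_remove (T : finType) (V : {set T}) (e : rel T) x y :
  x \in V -> deg V e y = e y x + deg (V :\ x) e y.
Proof.
move=> xV; rewrite /deg (cardsD1 x) inE xV /=; congr (_ + _); apply: eq_card => z.
rewrite !inE; by case: (z == x); case: (z \in V); case: (e y z).
Qed.

Lemma sum_bool_card (T : finType) (A : {set T}) (P : pred T) :
  \sum_(y in A) (P y : nat) = #|[set y in A | P y]|.
Proof.
rewrite -sum1_card big_mkcond [RHS]big_mkcond /=; apply: eq_bigr => y _.
by rewrite inE; case: (y \in A); case: (P y).
Qed.

Lemma D_remove (T : finType) (V : {set T}) (e : rel T) x :
  symmetric e -> irreflexive e -> x \in V ->
  D V e = D (V :\ x) e + 2 * deg V e x.
Proof.
move=> sym irr xV; rewrite /D (big_setD1 x xV) /=.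
rewrite (eq_bigr (fun y => e y x + deg (V :\ x) e y)); last first.
  by move=> y _; rewrite (deg_remove e y xV).
rewrite big_split /= sum_bool_card.
have -> : #|[set y in V :\ x | e y x]| = deg V e x.
  rewrite /deg; apply: eq_card => z; rewrite !inE sym.
  by case: eqP => [->|]; rewrite ?irr /= ?andbF // ?andbT.
lia.
Qed.

Lemma D_agree (T : finType) (V : {set T}) (e e' : rel T) :
  {in V &, forall x y, e x y = e' x y} -> D V e = D V e'.
Proof.
move=> h; apply: eq_bigr => x xV; rewrite /deg; apply: eq_card => y.
rewrite !inE; case yV : (y \in V) => //=; exact: h.
Qed.


Lemma minspan (T : finType) (V : {set T}) (e : rel T) (r : T -> nat) t :
  symmetric e -> noncross V e r ->
  (exists a b, [/\ a \in V, b \in V, e a b & r a + t <= r b]) ->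
  exists a b, [/\ a \in V, b \in V, e a b, r a + t <= r b &
    forall x y, x \in V -> y \in V -> r a < r x -> r x < r b -> e x y ->
      [/\ r a <= r y, r y <= r b, r y < r x + t & r x < r y + t]].
Proof.
move=> sym nc hex.
pose P k := [exists a in V, exists b in V, e a b && (r a + t <= r b) && (r b - r a == k)].
have hP : exists k, P k.
  case: hex => a [b [aV bV eab hab]]; exists (r b - r a).
  apply/existsP; exists a; rewrite aV /=; apply/existsP; exists b.
  by rewrite bV eab hab eqxx.
case: (ex_minnP hP) => k /existsP [a /andP [aV /existsP [b /andP [bV /andP [/andP [eab hab] /eqP hk]]]]] mink.
exists a, b; split => // x y xV yV hax hxb exy.
have nP : forall u v, u \in V -> v \in V -> e u v -> r u + t <= r v -> r v - r u < r b - r a -> False.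
  move=> u v uV vV euv huv hlt.
  have : P (r v - r u).
    apply/existsP; exists u; rewrite uV /=; apply/existsP; exists v.
    by rewrite vV euv huv eqxx.
  move/mink; lia.
case: (ltnP (r y) (r a)) => hya.
  by exfalso; apply: (nc y x a b) => //; rewrite sym.
case: (ltnP (r b) (r y)) => hby.
  by exfalso; apply: (nc a b x y).
split => //.
  case: (ltnP (r y) (r x + t)) => // h; exfalso; apply: (nP x y) => //; lia.
case: (ltnP (r x) (r y + t)) => // h; exfalso; apply: (nP y x) => //; [by rewrite sym | lia].
Qed.

Lemma ear (T : finType) (V : {set T}) (e : rel T) (r : T -> nat) :
  symmetric e -> irreflexive e -> {in V &, injective r} ->
  {in V, forall x, r x < #|V|} -> noncross V e r ->
  (forall y z, y \in V -> z \in V -> r z = (r y).+1 -> e y z) ->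
  (exists a b, [/\ a \in V, b \in V, e a b & r a + 3 <= r b]) ->
  exists x w, [/\ x \in V, w \in V, deg V e x = 2,
    (forall y, y \in V -> e x y -> r y = (r x).+1 \/ r x = (r y).+1) &
    e x w /\ deg V e w <= 4].
Proof.
move=> sym irr inj bnd nc cons hex.
have [a [b [aV bV eab hab M]]] := minspan sym nc hex.
have rbV := bnd b bV.
have srj := surj_of_inj inj bnd.
have [x1 x1V r1] : exists2 x, x \in V & r x = r a + 1.
  by apply: srj; clear -hab rbV; lia.
have [x2 x2V r2] : exists2 x, x \in V & r x = r a + 2.
  by apply: srj; clear -hab rbV; lia.
have [x3 x3V r3] : exists2 x, x \in V & r x = r a + 3.
  by apply: srj; clear -hab rbV; lia.
have neq : forall x y, x \in V -> y \in V -> e x y -> r y != r x.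
  move=> x y xV yV exy; apply/eqP => h.
  by move: exy; rewrite (inj y x yV xV h) irr.
have inside : forall x, x \in V -> r a < r x -> r x < r b -> deg V e x <= 4.
  move=> x xV h1 h2.
  apply: (@deg_le _ _ _ r x [:: r x - 2; r x - 1; r x + 1; r x + 2] inj) => y yV exy.
  have n1 := neq x y xV yV exy; have [m1 m2 m3 m4] := M x y xV yV h1 h2 exy.
  rewrite !inE; clear -n1 m1 m2 m3 m4; lia.
have e12 : e x1 x2 by apply: cons => //; clear -r1 r2 r3; lia.
have e23 : e x2 x3 by apply: cons => //; clear -r1 r2 r3; lia.
case E13 : (e x1 x3).
- have N2 : forall y, y \in V -> e x2 y -> r y = r a + 1 \/ r y = r a + 3.
    move=> y yV exy.
    have n1 := neq x2 y x2V yV exy.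
    have [m1 m2 m3 m4] := M x2 y x2V yV (ltac:(clear -r2; lia)) (ltac:(clear -r2 hab; lia)) exy.
    have h0 : r y != r a.
      apply/eqP => h; apply: (nc y x2 x1 x3) => //; first by rewrite sym.
      clear -h r1 r2 r3; lia.
    have h4 : r y != r a + 4.
      apply/eqP => h; apply: (nc x1 x3 x2 y) => //; clear -h r1 r2 r3; lia.
    clear -n1 m1 m2 m3 m4 h0 h4 r2; lia.
  exists x2, x1; split => //.
  + apply/eqP; rewrite eqn_leq; apply/andP; split.
      apply: (@deg_le _ _ _ r x2 [:: r a + 1; r a + 3] inj) => y yV exy.
      by rewrite !inE; case: (N2 y yV exy) => ->; rewrite eqxx ?orbT.
    apply: (@deg_ge2 _ _ _ _ x1 x3) => //.
      by apply/eqP => h; subst; clear -r1 r3; lia.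
    by rewrite sym.
  + move=> y yV exy; case: (N2 y yV exy) => ->; rewrite r2; [right | left]; clear; lia.
  + split; first by rewrite sym.
    apply: inside => //; clear -r1 hab; lia.
- have ea1 : e a x1 by apply: cons => //; clear -r1 r2 r3; lia.
  have N1 : forall y, y \in V -> e x1 y -> r y = r a \/ r y = r a + 2.
    move=> y yV exy.
    have h3 : r y != r a + 3.
      apply/eqP => h.
      have hy : y = x3 by apply: inj => //; clear -h r3; lia.
      by subst; rewrite E13 in exy.
    have n1 := neq x1 y x1V yV exy.
    have [m1 m2 m3 m4] := M x1 y x1V yV (ltac:(clear -r1; lia)) (ltac:(clear -r1 hab; lia)) exy.
    clear -n1 m1 m2 m3 m4 h3 r1; lia.
  exists x1, x2; split => //.
  + apply/eqP; rewrite eqn_leq; apply/andP; split.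
      apply: (@deg_le _ _ _ r x1 [:: r a; r a + 2] inj) => y yV exy.
      by rewrite !inE; case: (N1 y yV exy) => ->; rewrite eqxx ?orbT.
    apply: (@deg_ge2 _ _ _ _ a x2) => //.
      by apply/eqP => h; subst; clear -r2; lia.
    by rewrite sym.
  + move=> y yV exy; case: (N1 y yV exy) => ->; rewrite r1; [right | left]; clear; lia.
  + split => //; apply: inside => //; clear -r2 hab; lia.
Qed.


Lemma deg2_exists (T : finType) (V : {set T}) (e : rel T) (r : T -> nat) :
  symmetric e -> irreflexive e -> {in V &, injective r} ->
  {in V, forall x, r x < #|V|} -> noncross V e r -> 0 < #|V| ->
  exists2 x, x \in V & deg V e x <= 2.
Proof.
move=> sym irr inj bnd nc n0.
have srj := surj_of_inj inj bnd.
have neq : forall x y, x \in V -> y \in V -> e x y -> r y != r x.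
  move=> x y xV yV exy; apply/eqP => h.
  by move: exy; rewrite (inj y x yV xV h) irr.
case: (boolP [exists a in V, exists b in V, e a b && (r a + 2 <= r b)]) => H.
  have hex : exists a b, [/\ a \in V, b \in V, e a b & r a + 2 <= r b].
    case/existsP: H => a /andP [aV /existsP [b /andP [bV /andP [eab hab]]]].
    by exists a, b.
  have [a [b [aV bV eab hab M]]] := minspan sym nc hex.
  have rbV := bnd b bV.
  have [x1 x1V r1] : exists2 x, x \in V & r x = r a + 1.
    by apply: srj; clear -hab rbV; lia.
  exists x1 => //.
  apply: (@deg_le _ _ _ r x1 [:: r x1 - 1; r x1 + 1] inj) => y yV exy.
  have n1 := neq x1 y x1V yV exy.
  have [m1 m2 m3 m4] := M x1 y x1V yV (ltac:(clear -r1; lia)) (ltac:(clear -r1 hab; lia)) exy.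
  rewrite !inE; clear -n1 m3 m4; lia.
have [x0 x0V r0] := srj 0 n0.
exists x0 => //.
apply: (@leq_trans 1); last done.
apply: (@deg_le _ _ _ r x0 [:: 1] inj) => y yV exy.
have n1 := neq x0 y x0V yV exy.
case: (ltnP (r y) 2) => hy.
  by rewrite inE; clear -n1 hy r0; lia.
exfalso; move/negP: H; apply; apply/existsP; exists x0; rewrite x0V /=.
apply/existsP; exists y; rewrite yV exy /=; clear -hy r0; lia.
Qed.

Lemma outer_sub (T : finType) (V : {set T}) (e : rel T) x :
  outerplanar V e -> outerplanar (V :\ x) e.
Proof.
case=> p [inj nc]; exists p; split.
  by move=> a b /setD1P [_ aV] /setD1P [_ bV]; exact: inj.
apply: (noncross_sub (subsetDl V [set x])); exact: nc.
Qed.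

Lemma D_bound n (T : finType) (V : {set T}) (e : rel T) :
  symmetric e -> irreflexive e -> #|V| = n.+2 -> outerplanar V e ->
  D V e + 6 <= 4 * #|V|.
Proof.
move=> sym irr; elim: n V => [|n IH] V hV op.
  have : D V e <= \sum_(x in V) 1.
    apply: leq_sum => x xV; rewrite /deg.
    have <- : #|V :\ x| = 1 by move: hV; rewrite (cardsD1 x V) xV; case.
    apply: subset_leq_card; apply/subsetP => y; rewrite !inE.
    case/andP => yV exy; rewrite yV andbT; apply/eqP => h; subst; by rewrite irr in exy.
  rewrite sum1_card hV; lia.
case: (op) => p [injp ncp].
have [r [inj bnd eqv]] := rank_exists injp.
have nc : noncross V e r by exact: noncross_equiv ncp.
have [x xV dx] := deg2_exists sym irr inj bnd nc ltac:(by rewrite hV).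
have hV' : #|V :\ x| = n.+2 by move: hV; rewrite (cardsD1 x V) xV; case.
have := IH (V :\ x) hV' (outer_sub x op).
rewrite (D_remove sym irr xV) hV' hV; lia.
Qed.


Lemma add_edgeP (T : finType) (e : rel T) y z u v :
  add_edge e y z u v -> e u v \/ (u = y /\ v = z) \/ (u = z /\ v = y).
Proof.
rewrite /add_edge; case/or3P => [->| /andP[/eqP-> /eqP->] | /andP [/eqP -> /eqP ->]]; auto.
Qed.

Lemma equiv_sym (T : finType) (V : {set T}) (p r : T -> nat) :
  {in V &, forall x y, (p x < p y) = (r x < r y)} ->
  {in V &, forall x y, (r x < r y) = (p x < p y)}.
Proof. by move=> h x y xV yV; rewrite h. Qed.

Lemma sat_free (T : finType) (V : {set T}) (e : rel T) (p r : T -> nat) y z :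
  {in V &, forall x y, (p x < p y) = (r x < r y)} -> sat V e p ->
  y \in V -> z \in V -> r y < r z ->
  (forall c, c \in V -> ~ (r y < r c /\ r c < r z)) \/
  (forall c, c \in V -> r y <= r c /\ r c <= r z) -> e y z.
Proof.
move=> eqv [ncp satp] yV zV hyz F.
case E: (e y z) => //; exfalso.
have nc : noncross V e r by exact: noncross_equiv ncp.
apply: (satp y z yV zV).
- by apply/eqP => h; subst; move: hyz; rewrite ltnn.
- by rewrite E.
apply: (noncross_equiv (equiv_sym eqv)).
move=> a b c d Ha Hb Hc Hd Eab Ecd [h1 [h2 h3]].
case: (add_edgeP Eab) => [eab|[[ea eb]|[ea eb]]];
  case: (add_edgeP Ecd) => [ecd|[[ec ed]|[ec ed]]];
  try by apply: (nc a b c d).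
all: subst; case: F => F.
all: move: (F _ Ha) (F _ Hb) (F _ Hc) (F _ Hd); clear -h1 h2 h3 hyz; lia.
Qed.

Lemma sat_remove (T : finType) (V : {set T}) (e : rel T) (p r : T -> nat) x :
  symmetric e -> {in V &, forall x y, (p x < p y) = (r x < r y)} -> sat V e p ->
  x \in V -> (forall y, y \in V -> e x y -> r y = (r x).+1 \/ r x = (r y).+1) ->
  sat (V :\ x) e p.
Proof.
move=> sym eqv [ncp satp] xV adj; split.
  exact: (noncross_sub (subsetDl V [set x]) ncp).
move=> u w /setD1P [ux uV] /setD1P [wx wV] uw neuw NC.
apply: (satp u w uV wV uw neuw).
apply: (noncross_equiv (equiv_sym eqv)).
have eqv' : {in V :\ x &, forall x y, (p x < p y) = (r x < r y)}.
  by move=> a b /setD1P [_ aV] /setD1P [_ bV]; exact: eqv.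
have NCr := noncross_equiv eqv' NC.
have ex1 : forall v, add_edge e u w x v -> e x v.
  move=> v /add_edgeP [//|[[h _]|[h _]]]; subst; first by rewrite eqxx in ux.
  by rewrite eqxx in wx.
have ex2 : forall v, add_edge e u w v x -> e x v.
  move=> v /add_edgeP [h|[[_ h]|[_ h]]]; first by rewrite sym.
    by subst; rewrite eqxx in wx.
  by subst; rewrite eqxx in ux.
move=> a b c d Ha Hb Hc Hd Eab Ecd [h1 [h2 h3]].
case: (eqVneq a x) => [ax|ax].
  by subst; have := adj b Hb (ex1 b Eab); clear -h1 h2 h3; lia.
case: (eqVneq b x) => [bx|bx].
  by subst; have := adj a Ha (ex2 a Eab); clear -h1 h2 h3; lia.
case: (eqVneq c x) => [cx|cx].
  by subst; have := adj d Hd (ex1 d Ecd); clear -h1 h2 h3; lia.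
case: (eqVneq d x) => [dx|dx].
  by subst; have := adj c Hc (ex2 c Ecd); clear -h1 h2 h3; lia.
apply: (NCr a b c d _ _ _ _ Eab Ecd); by rewrite ?inE ?ax ?bx ?cx ?dx ?Ha ?Hb ?Hc ?Hd.
Qed.

Lemma sat_consec (T : finType) (V : {set T}) (e : rel T) (p r : T -> nat) :
  {in V &, forall x y, (p x < p y) = (r x < r y)} -> sat V e p ->
  {in V, forall x, r x < #|V|} ->
  (forall y z, y \in V -> z \in V -> r z = (r y).+1 -> e y z) /\
  (forall y z, y \in V -> z \in V -> r y = 0 -> r z = #|V|.-1 -> 0 < r z -> e y z).
Proof.
move=> eqv S bnd; split.
  move=> y z yV zV h; apply: (sat_free eqv S) => //; first by rewrite h.
  by left => c _; rewrite h; lia.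
move=> y z yV zV h0 h1 hz; apply: (sat_free eqv S) => //; first by rewrite h0.
right => c cV; have := bnd c cV; rewrite h0 h1; lia.
Qed.

Lemma D_sat n (T : finType) (V : {set T}) (e : rel T) (p : T -> nat) :
  symmetric e -> irreflexive e -> #|V| = n.+3 -> {in V &, injective p} ->
  sat V e p -> D V e + 6 = 4 * #|V|.
Proof.
move=> sym irr; elim: n V => [|n IH] V hV injp S;
  have [r [inj bnd eqv]] := rank_exists injp;
  have [cons fl] := sat_consec eqv S bnd;
  have srj := surj_of_inj inj bnd.
  have adj3 : forall u v, u \in V -> v \in V -> r u < r v -> e u v.
    move=> u v uV vV h; have := bnd v vV; have := bnd u uV; rewrite hV => hu hv.
    case: (eqVneq (r v) (r u).+1) => [h'|h']; first exact: cons.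
    apply: fl => //; rewrite ?hV; lia.
  rewrite /D (eq_bigr (fun _ => 2)) ?sum_nat_const ?hV //.
  move=> x xV; rewrite /deg.
  have <- : #|V :\ x| = 2 by move: hV; rewrite (cardsD1 x V) xV; case.
  apply: eq_card => y; rewrite !inE.
  case: (eqVneq y x) => [->|yx]; first by rewrite irr andbF.
  case yV : (y \in V) => //=.
  have : r y != r x by apply: contra yx => /eqP h; apply/eqP; exact: inj.
  rewrite neq_ltn => /orP [] h.
    by rewrite sym; apply: adj3.
  exact: adj3.
have n0 : 0 < #|V| by rewrite hV.
have [y0 y0V r0] := srj 0 n0.
have [z0 z0V rz] : exists2 z, z \in V & r z = n.+3 by apply: srj; rewrite hV.
have ey : e y0 z0 by apply: fl => //; rewrite ?rz ?hV.
have h03 : r y0 + 3 <= r z0 by rewrite r0 rz.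
have hex : exists a b, [/\ a \in V, b \in V, e a b & r a + 3 <= r b] by exists y0, z0.
have [x [w [xV wV dx adj _]]] := ear sym irr inj bnd (noncross_equiv eqv S.1) cons hex.
have S' := sat_remove sym eqv S xV adj.
have hV' : #|V :\ x| = n.+3 by move: hV; rewrite (cardsD1 x V) xV; case.
have injp' : {in V :\ x &, injective p}.
  by move=> a b /setD1P [_ aV] /setD1P [_ bV]; exact: injp.
have := IH (V :\ x) hV' injp' S'.
rewrite (D_remove sym irr xV) dx hV' hV; lia.
Qed.


Lemma add_edge_sym (T : finType) (e : rel T) u w :
  symmetric e -> symmetric (add_edge e u w).
Proof.
move=> sym a b; rewrite /add_edge (sym a b).
by case: (a == u); case: (b == w); case: (a == w); case: (b == u); rewrite /= ?orbT ?orbF.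
Qed.

Lemma add_edge_irr (T : finType) (e : rel T) u w :
  irreflexive e -> u != w -> irreflexive (add_edge e u w).
Proof.
move=> irr uw a; rewrite /add_edge irr /=; apply/negP.
case/orP => /andP [/eqP h1 /eqP h2]; move: uw; by rewrite -h1 -h2 eqxx.
Qed.

Lemma D_add (T : finType) (V : {set T}) (e : rel T) u w :
  symmetric e -> irreflexive e -> u \in V -> w \in V -> u != w -> ~~ e u w ->
  D V (add_edge e u w) = D V e + 2.
Proof.
move=> sym irr uV wV uw neuw.
rewrite (D_remove (add_edge_sym u w sym) (add_edge_irr irr uw) uV) (D_remove sym irr uV).
rewrite (@D_agree _ _ (add_edge e u w) e); last first.
  move=> a b /setD1P [au _] /setD1P [bu _].
  by rewrite /add_edge (negbTE au) (negbTE bu) /= andbF orbF.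
have -> : deg V (add_edge e u w) u = (deg V e u).+1.
  rewrite /deg.
  have -> : [set z in V | add_edge e u w u z] = w |: [set z in V | e u z].
    apply/setP => z; rewrite !inE /add_edge eqxx /= (negbTE uw) /= orbF.
    case: (eqVneq z w) => [->|zw]; first by rewrite wV orbT.
    by rewrite orbF.
  by rewrite cardsU1 inE (negbTE neuw) andbF.
lia.
Qed.

Theorem lemma2p2 (T : finType) (V : {set T}) (e : rel T) :
  symmetric e -> irreflexive e ->
  maximal_outerplanar V e -> 3 < #|V| ->
  exists v, [/\ v \in V, deg V e v = 2,
    maximal_outerplanar (V :\ v) e &
    exists w, [/\ w \in V, e v w & deg V e w <= 4]].
Proof.
move=> sym irr [h3 [op maxi]] h4.
case: (op) => p [injp ncp].
have S : sat V e p.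
  split => // u w uV wV uw neuw nc; apply: (maxi u w uV wV uw neuw).
  by exists p.
have [r [inj bnd eqv]] := rank_exists injp.
have [cons fl] := sat_consec eqv S bnd.
have srj := surj_of_inj inj bnd.
have n0 : 0 < #|V| by lia.
have [y0 y0V r0] := srj 0 n0.
have [z0 z0V rz] : exists2 z, z \in V & r z = #|V|.-1 by apply: srj; lia.
have ey : e y0 z0 by apply: fl => //; rewrite rz; lia.
have h03 : r y0 + 3 <= r z0 by rewrite r0 rz; lia.
have hex : exists a b, [/\ a \in V, b \in V, e a b & r a + 3 <= r b] by exists y0, z0.
have [x [w [xV wV dx adj [exw dw]]]] := ear sym irr inj bnd (noncross_equiv eqv ncp) cons hex.
have hV : #|V| = (#|V| - 3).+3 by lia.
have DV := D_sat sym irr hV injp S.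
have hV' : #|V :\ x| = (#|V| - 3).+2 by move: hV; rewrite (cardsD1 x V) xV; case.
exists x; split => //; last by exists w.
split; first by rewrite hV'; lia.
split; first exact: outer_sub.
move=> u w' uW wW uw neuw op'.
have := D_bound (add_edge_sym u w' sym) (add_edge_irr irr uw) hV' op'.
rewrite (D_add sym irr uW wW uw neuw).
move: DV; rewrite (D_remove sym irr xV) dx hV'; lia.
Qed.
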